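(* Let $\theta>0$, $\alpha>0$ and $x\in(0,1)\setminus\mathbb{Q}$. Suppose there exist a constant $C>0$ and a real polynomial $P$ of degree less than $\alpha$ such that $|f_\theta(x+h)-P(h)|\le C|h|^\alpha$ for all $h$ in a neighborhood of $0$. Then $P$ is the zero polynomial.
   Context: For $\theta>0$, the generalized Thomae function $f_\theta:\mathbb{R}\to\mathbb{R}$ is defined by $f_\theta(0)=1$, $f_\theta(x)=q^{-\theta}$ if $x$ is rational written as $x=p/q$ with $p\in\mathbb{Z}$, $q\in\mathbb{N}$ and $\gcd(p,q)=1$, and $f_\theta(x)=0$ if $x$ is irrational. *)

(* Defs.v *)
From Stdlib Require Import Reals Lra ZArith Znumtheory ClassicalEpsilon List.
Open Scope R_scope.

Definition lowest_denom (x : R) (q : nat) : Prop :=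
  (0 < q)%nat /\ exists p : Z, Z.gcd p (Z.of_nat q) = 1%Z /\ x = IZR p / INR q.

(* The denominator in lowest terms (chosen by Hilbert epsilon; it is unique
   when x is rational; the value is irrelevant when x is irrational). *)
Definition denom (x : R) : nat :=
  epsilon (inhabits 1%nat) (lowest_denom x).

(* Generalized Thomae function f_theta. Note f_theta(0) = 1 = 1^{-theta},
   since 0 = 0/1 in lowest terms. *)
Definition thomae (theta x : R) : R :=
  if excluded_middle_informative (exists q, lowest_denom x q)
  then Rpower (INR (denom x)) (- theta)
  else 0.

Fixpoint poly_eval (c : list R) (h : R) : R :=
  match c with
  | nil => 0
  | a :: c' => a + h * poly_eval c' h
  end.

(* |h|^a for a > 0, with the correct value 0 at h = 0
   (Stdlib's Rpower 0 a is exp(a * ln 0) = 1, which is wrong here). *)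
Definition abs_pow (h a : R) : R :=
  if Req_EM_T h 0 then 0 else Rpower (Rabs h) a.

(* Main.v *)
Require Import Defs.
From Stdlib Require Import Reals List Lra Lia.
Open Scope R_scope.

Lemma poly_cont (l : list R) (x0 : R) : continuity_pt (poly_eval l) x0.
Proof.
  induction l as [|a l IH]; simpl.
  - apply (continuity_pt_const (fun _ => 0)). intros u v; reflexivity.
  - change (continuity_pt ((fun _ => a) + (id * poly_eval l))%F x0).
    apply continuity_pt_plus.
    + apply continuity_pt_const. intros u v; reflexivity.
    + apply continuity_pt_mult; [apply derivable_continuous_pt, derivable_pt_id | exact IH].
Qed.

Lemma poly_at0 (l : list R) : poly_eval l 0 = nth 0 l 0.
Proof. destruct l; simpl; ring. Qed.

Lemma poly_factor (k : nat) : forall (c : list R) (h : R),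
  (forall j, (j < k)%nat -> nth j c 0 = 0) ->
  poly_eval c h = h ^ k * poly_eval (skipn k c) h.
Proof.
  induction k as [|k IH]; intros c h Hc; simpl.
  - ring.
  - destruct c as [|a c]; simpl.
    + ring.
    + rewrite (IH c h).
      * assert (a = 0) by (apply (Hc 0%nat); lia). subst; ring.
      * intros j Hj. apply (Hc (S j)). lia.
Qed.

Lemma nth_skipn_0 (k : nat) : forall (c : list R), nth 0 (skipn k c) 0 = nth k c 0.
Proof. induction k; intros [|a c]; simpl; auto. Qed.

Lemma thomae_irr (theta x : R) (n : nat) :
  (0 < n)%nat ->
  (~ exists (p : Z) (q : nat), (0 < q)%nat /\ x = IZR p / INR q) ->
  thomae theta (x + 1 / INR n) = 0.
Proof.
  intros Hn Hirr. unfold thomae.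
  destruct (ClassicalEpsilon.excluded_middle_informative _) as [[q [Hq [p [_ Hp]]]]|]; [|reflexivity].
  exfalso. apply Hirr.
  exists (p * Z.of_nat n - Z.of_nat q)%Z, (q * n)%nat. split; [lia|].
  assert (0 < INR n) by (apply lt_0_INR; lia).
  assert (0 < INR q) by (apply lt_0_INR; lia).
  rewrite mult_INR, minus_IZR, mult_IZR, <- !INR_IZR_INZ.
  assert (x = IZR p / INR q - 1 / INR n) by lra.
  rewrite H1. field. lra.
Qed.
Theorem mainTheorem2 (theta alpha x : R) (c : list R)
  (Htheta : 0 < theta) (Halpha : 0 < alpha)
  (Hx0 : 0 < x) (Hx1 : x < 1)
  (Hirr : ~ exists (p : Z) (q : nat), (0 < q)%nat /\ x = IZR p / INR q)
  (Hdeg : forall i : nat, alpha <= INR i -> nth i c 0 = 0)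
  (Happrox : exists C delta : R, 0 < C /\ 0 < delta /\
     forall h : R, Rabs h < delta ->
       Rabs (thomae theta (x + h) - poly_eval c h) <= C * abs_pow h alpha) :
  forall i : nat, nth i c 0 = 0.
Proof.
  destruct Happrox as [C [delta [HC [Hd Hap]]]].
  assert (Key : forall n : nat, (0 < n)%nat -> 1 / INR n < delta ->
     Rabs (poly_eval c (1 / INR n)) <= C * Rpower (1 / INR n) alpha).
  { intros n Hn Hlt.
    assert (0 < INR n) by (apply lt_0_INR; lia).
    assert (0 < 1 / INR n) by (apply Rdiv_lt_0_compat; lra).
    specialize (Hap (1 / INR n)). rewrite thomae_irr in Hap by assumption.
    rewrite Rabs_pos_eq in Hap by lra.
    specialize (Hap Hlt). unfold abs_pow in Hap.
    destruct (Req_EM_T _ 0); [lra|]. rewrite (Rabs_pos_eq (1 / INR n)) in Hap by lra.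
    rewrite <- Rabs_Ropp. replace (- poly_eval c (1 / INR n)) with (0 - poly_eval c (1 / INR n)) by ring.
    exact Hap. }
  assert (All : forall k, forall j, (j < k)%nat -> nth j c 0 = 0).
  { induction k as [|k IH]; intros j Hj; [lia|].
    destruct (Nat.lt_ge_cases j k) as [Hjk|Hjk]; [now apply IH|].
    assert (j = k) by lia. subst j.
    destruct (Rle_lt_dec alpha (INR k)) as [Hak|Hak]; [now apply Hdeg|].
    destruct (Req_dec (nth k c 0) 0) as [E|Hne]; [exact E|exfalso].
    set (m := Rabs (nth k c 0)).
    assert (Hm : 0 < m) by (apply Rabs_pos_lt; exact Hne).
    set (Q := poly_eval (skipn k c)).
    assert (HQ0 : Q 0 = nth k c 0) by (unfold Q; now rewrite poly_at0, nth_skipn_0).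
    pose proof (poly_cont (skipn k c) 0) as Hc.
    unfold continuity_pt, continue_in, limit1_in, limit_in in Hc.
    destruct (Hc (m / 2)) as [eta [Heta Hceta]]; [lra|].
    set (b := alpha - INR k).
    assert (Hb : 0 < b) by (unfold b; lra).
    set (t0 := exp (ln (m / (2 * C)) / b)).
    assert (Ht0 : 0 < t0) by apply exp_pos.
    set (t := Rmin eta (Rmin delta t0)).
    assert (Ht : 0 < t) by (unfold t; repeat apply Rmin_glb_lt; lra).
    destruct (INR_unbounded (/ t)) as [n Hn].
    assert (Hn0 : (0 < n)%nat).
    { destruct n; [|lia]. simpl in Hn. pose proof (Rinv_0_lt_compat t Ht). lra. }
    assert (HnR : 0 < INR n) by (apply lt_0_INR; lia).
    set (h := 1 / INR n).
    assert (Hh : 0 < h) by (unfold h; apply Rdiv_lt_0_compat; lra).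
    assert (Hht : h < t).
    { unfold h. apply (Rmult_lt_reg_r (INR n * / t)).
      - apply Rmult_lt_0_compat; [lra| now apply Rinv_0_lt_compat].
      - field_simplify; try lra. }
    assert (Hte : t <= eta) by apply Rmin_l.
    assert (Htd : t <= delta) by (unfold t; eapply Rle_trans; [apply Rmin_r| apply Rmin_l]).
    assert (Htt0 : t <= t0) by (unfold t; eapply Rle_trans; [apply Rmin_r| apply Rmin_r]).
    specialize (Key n Hn0 ltac:(fold h; lra)). fold h in Key.
    rewrite (poly_factor k c h (fun j Hj => IH j Hj)) in Key.
    fold Q in Key.
    replace alpha with (INR k + b) in Key by (unfold b; ring).
    rewrite Rpower_plus, Rpower_pow in Key by lra.
    rewrite Rabs_mult, Rabs_pos_eq in Key by (apply pow_le; lra).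
    assert (Hhk : 0 < h ^ k) by (apply pow_lt; lra).
    assert (HQb : Rabs (Q h) <= C * Rpower h b).
    { apply (Rmult_le_reg_l (h ^ k)); [lra|]. lra. }
    assert (Hpw : C * Rpower h b < m / 2).
    { unfold Rpower.
      assert (ln h < ln t0) by (apply ln_increasing; lra).
      assert (b * ln h < b * ln t0) by (apply Rmult_lt_compat_l; lra).
      assert (Hl : b * ln t0 = ln (m / (2 * C))).
      { unfold t0. rewrite ln_exp. field. lra. }
      assert (exp (b * ln h) < m / (2 * C)).
      { rewrite <- (exp_ln (m / (2*C))) by (apply Rdiv_lt_0_compat; lra).
        apply exp_increasing. lra. }
      apply (Rmult_lt_compat_l C) in H1; [|lra].
      replace (C * (m / (2 * C))) with (m / 2) in H1 by (field; lra). exact H1. }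
    assert (HQc : Rabs (Q h - Q 0) < m / 2).
    { apply (Hceta h). split; [split; [exact I|lra]|]. unfold R_dist. simpl.
      unfold R_dist. rewrite Rminus_0_r, Rabs_pos_eq; lra. }
    rewrite HQ0 in HQc. fold m in HQc.
    pose proof (Rabs_triang_inv (nth k c 0) (Q h)).
    rewrite <- Rabs_Ropp in HQc. replace (- (Q h - nth k c 0)) with (nth k c 0 - Q h) in HQc by ring.
    fold m in H. lra. }
  intro i. apply (All (S i)). lia.
Qed.
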